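(* Let $\mathbf w=(w_n)_{n\ge1}$ be a weight sequence such that there exists $C>0$ with $w_{mn}\le Cw_mw_n$ for all $m,n\in\mathbb N$. Then for every $p\ge1$ and all $\alpha,\beta\in\ell_{\mathbf w,p}$, $$\|\alpha\otimes\beta\|_{\mathbf w,p}\le C^{1/p}\|\alpha\|_{\mathbf w,p}\|\beta\|_{\mathbf w,p}.$$ In particular, $\ell_{\mathbf w,p}$ is a stable Calkin space.
   Context: A weight sequence is a non-increasing sequence $\mathbf w$ of positive numbers with $w_1=1$, $w_n\to0$ and $\sum_nw_n=\infty$. For $1\le p<\infty$, the Lorentz sequence space $\ell_{\mathbf w,p}$ is the space of complex sequences $\alpha$ with $\|\alpha\|_{\mathbf w,p}=\sup_\pi(\sum_n w_n|\alpha_{\pi(n)}|^p)^{1/p}<\infty$, sup over permutations $\pi$ of $\mathbb N$ (equivalently $(\sum_nw_n(\alpha^\star_n)^p)^{1/p}$, with $\alpha^\star$ the non-increasing rearrangement of $(|\alpha_n|)$). For null sequences $\alpha,\beta$, $\alpha\otimes\beta$ is the non-increasing rearrangement with multiplicities of $(|\alpha_i\beta_j|)_{i,j}$. A Calkin space is a linear subspace $\mathfrak i$ of the null sequences $c_0$ such that $\alpha\in\mathfrak i,\beta\in c_0,\beta^\star\le\alpha^\star$ imply $\beta\in\mathfrak i$; it is stable if the smallest Calkin space containing all $\alpha\otimes\beta$, $\alpha,\beta\in\mathfrak i$, equals $\mathfrak i$. *)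

(* Defs.v *)
From mathcomp Require Import all_boot all_order all_algebra.
From mathcomp Require Import all_classical all_reals all_analysis.
From mathcomp Require Import complex.
Import Order.TTheory GRing.Theory Num.Theory.
Import numFieldNormedType.Exports.

Set Implicit Arguments.
Unset Strict Implicit.
Unset Printing Implicit Defensive.

Local Open Scope classical_set_scope.
Local Open Scope ring_scope.
Local Open Scope complex_scope.

Section Lorentz.
Variable R : realType.

Definition cabs (z : R[i]) : R := Num.sqrt (complex.Re z ^+ 2 + complex.Im z ^+ 2).

Definition null_seq (a : nat -> R[i]) : Prop := (fun n => cabs (a n)) @ \oo --> (0 : R).

(* Weight sequence w = (w_n)_{n >= 1}; the value w 0 is irrelevant.
   non-increasing, positive, w_1 = 1, w_n -> 0, sum_n w_n = oo. *)
Definition weight_seq (w : nat -> R) : Prop :=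
  [/\ w 1%N = 1,
      (forall n, (1 <= n)%N -> 0 < w n),
      (forall n, (1 <= n)%N -> w n.+1 <= w n),
      w @ \oo --> (0 : R) &
      (\sum_(1 <= n <oo) (w n)%:E = +oo)%E].

(* p-th power of the Lorentz norm:
   sup over permutations pi of N of sum_{n>=1} w_n |a_{pi(n)}|^p
   (sequences a are indexed from 0, so the n-th term is a (pi n) with
    weight w n.+1). *)
Definition lorentz_pow (w : nat -> R) (p : R) (a : nat -> R[i]) : \bar R :=
  ereal_sup [set (\sum_(0 <= n <oo) (w n.+1 * cabs (a (pi n)) `^ p)%:E)%E
            | pi in [set pi : nat -> nat | bijective pi]].

Definition lorentz_space (w : nat -> R) (p : R) : set (nat -> R[i]) :=
  [set a | (lorentz_pow w p a < +oo)%E].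

(* the Lorentz norm ||a||_{w,p} (meaningful for a in l_{w,p}) *)
Definition lorentz_norm (w : nat -> R) (p : R) (a : nat -> R[i]) : R :=
  (fine (lorentz_pow w p a)) `^ p^-1.

(* Non-increasing rearrangement with multiplicities of a (bounded, null)
   nonnegative family f indexed by I:
   f*_n = inf_{|F| <= n} sup_{i notin F} f i   (n >= 0, 0-based). *)
Definition dec_rearr (I : eqType) (f : I -> R) (n : nat) : R :=
  inf [set sup [set f i | i in [set i | i \notin F]]
      | F in [set F : seq I | size F = n]].

Definition rearr (a : nat -> R[i]) : nat -> R := dec_rearr (fun k => cabs (a k)).

Definition tensor (a b : nat -> R[i]) : nat -> R[i] :=
  fun n => (dec_rearr (fun ij : nat * nat => cabs (a ij.1 * b ij.2)) n)%:C.

Definition calkin (I : set (nat -> R[i])) : Prop :=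
  [/\ I `<=` null_seq,
      I (fun _ => 0),
      (forall a b, I a -> I b -> I (fun n => a n + b n)),
      (forall (c : R[i]) a, I a -> I (fun n => c * a n)) &
      (forall a b, I a -> null_seq b -> (forall n, rearr b n <= rearr a n) -> I b)].

Definition calkin_hull (S : set (nat -> R[i])) : set (nat -> R[i]) :=
  [set x | forall J, calkin J -> S `<=` J -> J x].

Definition stable (I : set (nat -> R[i])) : Prop :=
  calkin_hull [set tensor a b | a in I & b in I] = I.

End Lorentz.

(* Main.v *)
Require Import Defs.
From mathcomp Require Import all_boot all_order all_algebra.
From mathcomp Require Import all_classical all_reals all_analysis.
From mathcomp Require Import complex.
Import Order.TTheory GRing.Theory Num.Theory.
Local Open Scope classical_set_scope.
Local Open Scope ring_scope.
Local Open Scope complex_scope.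
Set Implicit Arguments.
Unset Strict Implicit.
Unset Printing Implicit Defensive.
From mathcomp Require Import zify ring.
Local Open Scope nat_scope.
Definition qq (z : nat * nat) := (z.1.+1 * z.2.+1)%N.
Definition boxclosed (D : seq (nat * nat)) :=
  forall y, y \in D -> forall z : nat * nat, (z.1 <= y.1)%N -> (z.2 <= y.2)%N -> z \in D.

Lemma ex_min_keyN (T : Type) (P : T -> Prop) (kappa : T -> nat) :
  (exists i, P i) -> exists i, P i /\ forall j, P j -> (kappa i <= kappa j)%N.
Proof.
move=> [i0 Pi0].
have ex : exists n, `[< exists i, P i /\ kappa i = n >].
  by exists (kappa i0); apply/asboolP; exists i0.
case: (ex_minnP ex) => n /asboolP [i [Pi ki]] nmin.
exists i; split => // j Pj; rewrite ki; apply: nmin; apply/asboolP; by exists j.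
Qed.

Lemma count_q D k : uniq D -> boxclosed D -> (k <= size D)%N ->
  (k <= count (fun z => qq z <= k) D)%N.
Proof.
move=> uD bD kD; apply: contraT; rewrite -ltnNge => ck.
have : has (fun z => k < qq z) D.
  apply/negPn/negP => /hasPn H.
  have : count (fun z => qq z <= k) D = size D.
    rewrite -count_predT; apply: eq_in_count => z /H; by rewrite -leqNgt.
  by move=> e; move: ck; rewrite e ltnNge kD.
case/hasP => y0 y0D ky0.
have [y [[yD ky] ymin]] := @ex_min_keyN _ (fun z => z \in D /\ (k < qq z)%N) qq
  (ex_intro _ y0 (conj y0D ky0)).
move: y yD ky ymin => [a b] yD ky ymin.
pose box := [seq (i, j) | i <- iota 0 a.+1, j <- iota 0 b.+1].
have ybox : (a, b) \in box.
  have H n : n \in iota 0 n.+1 by rewrite mem_iota add0n ltnS leqnn.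
  by apply/allpairsP; exists (a, b); split; [exact: H | exact: H | by []].
have ub : uniq box.
  by apply: allpairs_uniq; rewrite ?iota_uniq // => -[x1 x2] [x3 x4] _ _ /= [-> ->].
have sb : size box = qq (a, b) by rewrite size_allpairs !size_iota.
have sub : {subset rem (a, b) box <= [seq z <- D | qq z <= k]}.
  move=> z; rewrite mem_rem_uniq // => /andP[zy /allpairsP[[i j] [iI jI ez]]].
  move: iI jI; rewrite !mem_iota !add0n !ltnS /= => ia jb; subst z.
  rewrite mem_filter.
  have zD : (i, j) \in D by exact: (bD _ yD (i, j) ia jb).
  rewrite zD andbT leqNgt; apply/negP => kz.
  have := ymin _ (conj zD kz).
  rewrite /qq /= leqNgt => /negP; apply.
  case: (ltnP i a) => ia'; first by nia.
  have ea : i = a by lia.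
  subst i; case: (ltnP j b) => jb'; first by nia.
  have eb : j = b by lia.
  by subst j; rewrite eqxx in zy.
have := uniq_leq_size (rem_uniq (a, b) ub) sub.
rewrite size_rem // sb size_filter => h.
by move: ck; rewrite ltnNge (leq_trans _ h) //; rewrite -ltnS (ltn_predK ky).
Qed.

Section SQ.
Variable R : realDomainType.
Local Open Scope ring_scope.

Lemma W_anti (W : nat -> R) : (forall n, W n.+2 <= W n.+1) ->
  forall x y, (1 <= x)%N -> (x <= y)%N -> W y <= W x.
Proof.
move=> Wd x y x1; elim: y => [|y IH] xy; first by move: (leq_trans x1 xy).
rewrite leq_eqVlt in xy; case/orP: xy => [/eqP ->//|xy].
rewrite ltnS in xy; apply: le_trans (IH xy).
by case: y {IH} xy => [|y] xy; [move: (leq_trans x1 xy) | exact: Wd].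
Qed.

Lemma sum_q (W : nat -> R) D : (forall n, W n.+2 <= W n.+1) -> uniq D -> boxclosed D ->
  \sum_(n < size D) W n.+1 <= \sum_(z <- D) W (qq z).
Proof.
move=> Wd uD bD.
pose s := sort leq (map qq D).
have ps : perm_eq s (map qq D) by rewrite perm_sort.
have ss : size s = size D by rewrite (perm_size ps) size_map.
rewrite -(big_map qq xpredT W) -(perm_big _ ps) (big_nth 0%N) big_mkord ss.
apply: ler_sum => -[m /= mD] _.
have sorts : sorted leq s by apply: sort_sorted; exact: leq_total.
have q1 : (1 <= nth 0%N s m)%N.
  have : nth 0%N s m \in map qq D by rewrite -(perm_mem ps) mem_nth // ss.
  by case/mapP => z _ ->; rewrite /qq muln_gt0.
apply: W_anti => //.
rewrite leqNgt; apply/negP => big.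
have c1 := count_q uD bD mD.
have : count (fun x => x <= m.+1)%N s = count (fun z => qq z <= m.+1)%N D.
  by rewrite (permP ps) count_map.
move=> ce; move: c1; rewrite -ce.
rewrite -(cat_take_drop m s) count_cat.
have -> : count (fun x => x <= m.+1)%N (drop m s) = 0%N.
  apply/eqP; rewrite -leqn0 leqNgt -has_count; apply/hasPn => x.
  move=> xin; have [i il ix] := @nthP _ (drop m s) x 0%N xin; subst x.
  rewrite size_drop in il.
  rewrite nth_drop -ltnNge; apply: leq_trans big _.
  apply: (sorted_leq_nth leq_trans leqnn) => //; rewrite ?inE ?leq_addr //; [by rewrite ss|by rewrite -ltn_subRL].

rewrite addn0; apply/negP; rewrite -ltnNge ltnS.
apply: leq_trans (count_size _ _) _; by rewrite size_take ss mD.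
Qed.
End SQ.
Local Open Scope ring_scope.

Section S.
Variable R : realType.
Lemma cabsE (z : R[i]) : (cabs z)%:C = `|z|.
Proof. by rewrite normc_def. Qed.
Lemma cabs_ge0 (z : R[i]) : 0 <= cabs z.
Proof. exact: sqrtr_ge0. Qed.
Lemma cabsM (x y : R[i]) : cabs (x * y) = cabs x * cabs y.
Proof. apply: (@complexI R). rewrite rmorphM /= !cabsE. exact: normrM. Qed.
Lemma cabsD (x y : R[i]) : cabs (x + y) <= cabs x + cabs y.
Proof. rewrite -lecR rmorphD /= !cabsE. exact: ler_normD. Qed.
Lemma cabsC (x : R) : cabs (x%:C) = `|x|.
Proof. by rewrite /cabs /= expr0n /= addr0 sqrtr_sqr. Qed.
Lemma cabs0 : cabs (0 : R[i]) = 0.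
Proof. by rewrite (cabsC 0) normr0. Qed.

Definition greedy (I : eqType) (f : I -> R) (e : nat -> I) :=
  injective e /\ forall n j, j \notin map e (iota 0 n) -> f j <= f (e n).

Lemma notin_map_iota (I : eqType) (e : nat -> I) m n :
  injective e -> (m <= n)%N -> e n \notin map e (iota 0 m).
Proof.
move=> ie mn; apply/mapP => -[k]; rewrite mem_iota add0n => /andP[_ km] /ie nk.
by move: mn; rewrite nk leqNgt km.
Qed.

Lemma greedy_mono (I : eqType) (f : I -> R) e m n :
  greedy f e -> (m <= n)%N -> f (e n) <= f (e m).
Proof. by move=> [ie g] mn; apply: g; apply: notin_map_iota. Qed.

Lemma greedy_dec (I : eqType) (f : I -> R) e n :
  greedy f e -> dec_rearr f n = f (e n).
Proof.
move=> [ie g].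
have ub : forall F : seq I, has_ubound [set f i | i in [set i | i \notin F]].
  by move=> F; exists (f (e 0%N)) => _ [i _ <-]; apply: g.
have key : forall F : seq I, size F = n ->
    f (e n) <= sup [set f i | i in [set i | i \notin F]].
  move=> F sF.
  have : has (fun x => x \notin F) (map e (iota 0 n.+1)).
    apply/negPn/negP => /hasPn H.
    have := @uniq_leq_size _ (map e (iota 0 n.+1)) F.
    rewrite size_map size_iota sF ltnn map_inj_uniq ?iota_uniq //.
    move=> /(_ isT) H2; suff: false by []; apply: H2 => x /H; exact: negbNE.
  case/hasP => x /mapP[k]; rewrite mem_iota add0n => /andP[_ kn] -> ekF.
  apply: (le_trans (greedy_mono (conj ie g) _)); first by rewrite -ltnS; exact: kn.
  by apply: ub_le_sup => //; exists (e k).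
set F0 := map e (iota 0 n).
have sF0 : size F0 = n by rewrite size_map size_iota.
have eq0 : sup [set f i | i in [set i | i \notin F0]] = f (e n).
  apply/eqP; rewrite eq_le; apply/andP; split; last exact: key.
  apply: ge_sup; first by exists (f (e n)), (e n) => //; apply: notin_map_iota.
  by move=> _ [i /= iF <-]; apply: g.
rewrite /dec_rearr; apply/eqP; rewrite eq_le; apply/andP; split.
  rewrite -eq0; apply: ge_inf; first by exists (f (e n)) => _ [F /= sF <-]; apply: key.
  by exists F0.
apply: lb_le_inf; first by exists (sup [set f i | i in [set i | i \notin F0]]), F0.
by move=> _ [F /= sF <-]; apply: key.
Qed.

Lemma sum_const_seq (T : Type) (s : seq T) (c : R) : \sum_(x <- s) c = c *+ size s.
Proof. by elim: s => [|x s IH]; rewrite ?big_nil ?big_cons ?IH ?mulrS. Qed.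

Lemma greedy_major (I : eqType) (f : I -> R) e (phi : R -> R) (J : seq I) :
  greedy f e -> (forall i, 0 <= f i) ->
  (forall x y, 0 <= x -> x <= y -> phi x <= phi y) -> uniq J ->
  \sum_(j <- J) phi (f j) <= \sum_(n < size J) phi (f (e n)).
Proof.
move=> [ie g] f0 phim uJ.
set m := size J; set E := map e (iota 0 m).
have uE : uniq E by rewrite map_inj_uniq ?iota_uniq.
have -> : \sum_(n < m) phi (f (e n)) = \sum_(x <- E) phi (f x).
  by rewrite big_map -(big_mkord xpredT (fun n => phi (f (e n)))) /index_iota subn0.
rewrite (bigID (fun j => j \in E)) [X in _ <= X](bigID (fun j => j \in J)) /=.
have pe : perm_eq [seq j <- J | j \in E] [seq j <- E | j \in J].
  apply: uniq_perm; [exact: filter_uniq|exact: filter_uniq|] => x.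
  by rewrite !mem_filter andbC.
have -> : \sum_(j <- J | j \in E) phi (f j) = \sum_(j <- E | j \in J) phi (f j).
  by rewrite -[LHS]big_filter -[RHS]big_filter; apply: perm_big.
apply: lerD; first exact: lexx.
pose c := phi (f (e m)).
have cnt : count (fun j => j \notin E) J = count (fun j => j \notin J) E.
  have h1 := count_predC (fun j => j \in E) J.
  have h2 := count_predC (fun j => j \in J) E.
  have h3 := perm_size pe; rewrite !size_filter in h3.
  have sE : size E = m by rewrite size_map size_iota.
  move: h1 h2; rewrite h3 sE -/m => h1 h2.
  by apply/eqP; rewrite -(eqn_add2l (count (fun j => j \in J) E)) /predC /= h1 h2.
apply: (@le_trans _ _ (\sum_(j <- J | j \notin E) c)).
  apply: ler_sum => j jE; apply: phim => //; apply: g; exact: jE.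
apply: (@le_trans _ _ (\sum_(j <- E | j \notin J) c)).
  have -> // : \sum_(j <- J | j \notin E) c = \sum_(j <- E | j \notin J) c.
  by rewrite -[LHS]big_filter -[RHS]big_filter !sum_const_seq !size_filter cnt.
rewrite [X in _ <= X]big_seq_cond [X in X <= _]big_seq_cond.
apply: ler_sum => x /andP[/mapP[k]]; rewrite mem_iota add0n => /andP[_ km] -> _.
apply: phim => //; apply: (greedy_mono (conj ie g)); exact: ltnW.
Qed.


Lemma abel (v z : nat -> R) N : (forall n, 0 <= v n) -> (forall n, v n.+1 <= v n) ->
  (forall k, (k < N)%N -> 0 <= \sum_(n < k.+1) z n) -> 0 <= \sum_(n < N) v n * z n.
Proof.
move=> v0 vd zp; case: N zp => [|M] zp; first by rewrite big_ord0.
suff H : forall k, (k <= M)%N -> v k * \sum_(n < k.+1) z n <= \sum_(n < k.+1) v n * z n.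
  by apply: le_trans (H M (leqnn M)); apply: mulr_ge0 => //; apply: zp.
elim=> [|k IH] kM; first by rewrite !big_ord1.
rewrite big_ord_recr [X in _ <= X]big_ord_recr /= mulrDr.
apply: lerD => //; apply: le_trans (IH (ltnW kM)).
by apply: ler_wpM2r => //; apply: zp; apply: ltnW.
Qed.

Lemma abel2 (v x y : nat -> R) N : (forall n, 0 <= v n) -> (forall n, v n.+1 <= v n) ->
  (forall k, (k < N)%N -> \sum_(n < k.+1) x n <= \sum_(n < k.+1) y n) ->
  \sum_(n < N) v n * x n <= \sum_(n < N) v n * y n.
Proof.
move=> v0 vd h; rewrite -subr_ge0 -sumrB.
under eq_bigr do rewrite -mulrBr.
apply: (@abel v (fun n => y n - x n)) => // k kN; rewrite sumrB subr_ge0; exact: h.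
Qed.

Lemma seq_argmax (T : eqType) (f : T -> R) (s : seq T) x0 : x0 \in s ->
  exists2 m, m \in s & forall x, x \in s -> f x <= f m.
Proof.
elim: s x0 => [//|y s IH] x0 _.
case: s IH => [|z s] IH.
  by exists y; rewrite ?mem_seq1 // => x; rewrite mem_seq1 => /eqP ->.
have [m ms mmax] := IH z (mem_head _ _).
have [fym|fmy] := leP (f y) (f m).
  exists m; first by rewrite in_cons ms orbT.
  by move=> x /[!in_cons] /orP[/eqP ->//|xs]; apply: mmax.
exists y; first exact: mem_head.
move=> x /[!in_cons] /orP[/eqP ->//|xs].
by apply: le_trans (mmax _ xs) (ltW fmy).
Qed.

Lemma ex_min_key (T : Type) (P : T -> Prop) (kappa : T -> nat) :
  (exists i, P i) -> exists i, P i /\ forall j, P j -> (kappa i <= kappa j)%N.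
Proof.
move=> [i0 Pi0].
have ex : exists n, `[< exists i, P i /\ kappa i = n >].
  by exists (kappa i0); apply/asboolP; exists i0.
case: (ex_minnP ex) => n /asboolP [i [Pi ki]] nmin.
exists i; split => // j Pj; rewrite ki; apply: nmin; apply/asboolP; by exists j.
Qed.

Lemma greedy_step (I : eqType) (f : I -> R) (kappa : I -> nat) :
  (forall i, 0 <= f i) ->
  (forall eps, 0 < eps -> exists L : seq I, forall i, eps <= f i -> i \in L) ->
  (forall F : seq I, exists i, i \notin F) ->
  forall F : seq I, exists i, [/\ i \notin F, (forall j, j \notin F -> f j <= f i) &
      (forall j, j \notin F -> f j = f i -> (kappa i <= kappa j)%N)].
Proof.
move=> f0 fin inf F.
have [m [mF mmax]] : exists m, m \notin F /\ forall j, j \notin F -> f j <= f m.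
  have [[j0 [j0F fj0]]|] := pselect (exists j0, j0 \notin F /\ 0 < f j0); last first.
    move=> H; have [i iF] := inf F; exists i; split => // j jF.
    apply: le_trans (f0 i); rewrite leNgt; apply/negP => fj; apply: H; by exists j.
  have [L HL] := fin _ fj0.
  have j0L : j0 \in [seq i <- L | i \notin F] by rewrite mem_filter j0F HL.
  have [m] := seq_argmax f j0L; rewrite mem_filter => /andP[mF _] mmax.
  exists m; split => // j jF.
  have [fj|fj] := leP (f j0) (f j).
    by apply: mmax; rewrite mem_filter jF HL.
  by apply: le_trans (ltW fj) _; apply: mmax.
have [i [[iF fi] imin]] := @ex_min_key _ (fun i => i \notin F /\ f i = f m) kappa
  (ex_intro _ m (conj mF erefl)).
exists i; split => // [j jF|j jF fj]; first by rewrite fi; apply: mmax.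
by apply: imin; split => //; rewrite fj.
Qed.

Definition tiebreak (I : eqType) (f : I -> R) (kappa : I -> nat) (e : nat -> I) :=
  forall n j, j \notin map e (iota 0 n) -> f j = f (e n) -> (kappa (e n) <= kappa j)%N.

Lemma greedy_exists (I : eqType) (f : I -> R) (kappa : I -> nat) :
  (forall i, 0 <= f i) ->
  (forall eps, 0 < eps -> exists L : seq I, forall i, eps <= f i -> i \in L) ->
  (forall F : seq I, exists i, i \notin F) ->
  exists e : nat -> I, greedy f e /\ tiebreak f kappa e.
Proof.
move=> f0 fin inf.
have st := greedy_step kappa f0 fin inf.
pose pk (F : seq I) := projT1 (cid (st F)).
have pkP : forall F, [/\ pk F \notin F, (forall j, j \notin F -> f j <= f (pk F)) &
      (forall j, j \notin F -> f j = f (pk F) -> (kappa (pk F) <= kappa j)%N)].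
  by move=> F; rewrite /pk; case: cid.
pose pref := fix pref n := if n is n'.+1 then rcons (pref n') (pk (pref n')) else [::].
pose e n := pk (pref n).
have prefE : forall n, pref n = map e (iota 0 n).
  elim=> [//|n IH]; change (rcons (pref n) (e n) = map e (iota 0 n.+1)).
  by rewrite -addn1 iotaD map_cat -IH add0n cats1.
have enot : forall n, e n \notin map e (iota 0 n).
  by move=> n; rewrite -prefE; case: (pkP (pref n)).
have ie : injective e.
  move=> m n emn; case: (ltngtP m n) => [lt|lt|//].
  - have := enot n; rewrite -emn => /negP H; exfalso; apply: H; apply/mapP.
    by exists m => //; rewrite mem_iota.
  - have := enot m; rewrite emn => /negP H; exfalso; apply: H; apply/mapP.
    by exists n => //; rewrite mem_iota.
exists e; split; first split => //.
- by move=> n j; rewrite -prefE; case: (pkP (pref n)) => _ H _; apply: H.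
- by move=> n j; rewrite -prefE; case: (pkP (pref n)) => _ _ H; apply: H.
Qed.

Lemma sum_iota_ord (F : nat -> R) k : \sum_(n <- iota 0 k) F n = \sum_(n < k) F n.
Proof. by rewrite -(big_mkord xpredT) /index_iota subn0. Qed.

Lemma nneseries_le_ub (u : nat -> \bar R) (M : \bar R) : (forall n, (0 <= u n)%E) ->
  (forall N, (\sum_(0 <= i < N) u i <= M)%E) -> (\sum_(0 <= i <oo) u i <= M)%E.
Proof.
move=> u0 H; apply: (lime_le (is_cvg_nneseries (fun n _ _ => u0 n))).
by apply: nearW => n; apply: H.
Qed.

Lemma powR_homo (p x y : R) : 0 <= p -> 0 <= x -> x <= y -> x `^ p <= y `^ p.
Proof.
move=> p0 x0 xy; apply: (ge0_ler_powR p0) => //; rewrite nnegrE //.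
exact: le_trans xy.
Qed.

Definition finsup (I : eqType) (f : I -> R) :=
  forall eps, 0 < eps -> exists L : seq I, forall i, eps <= f i -> i \in L.

Lemma null_finsup (a : nat -> R[i]) : null_seq a -> finsup (fun k => cabs (a k)).
Proof.
move=> /cvgrPdist_lt H eps e0; have [N _ HN] := H eps e0.
exists (iota 0 N) => i fi; rewrite mem_iota add0n /= ltnNge; apply/negP => Ni.
have := HN i Ni; rewrite sub0r normrN ger0_norm ?cabs_ge0 // => /lt_le_trans/(_ fi).
by rewrite ltxx.
Qed.

Lemma mem_le_sumn (x : nat) s : x \in s -> (x <= sumn s)%N.
Proof.
elim: s => [//|y s IH]; rewrite in_cons /= => /orP[/eqP ->|/IH]; first exact: leq_addr.
by move=> h; apply: leq_trans h (leq_addl _ _).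
Qed.

Lemma nat_inf (F : seq nat) : exists i, i \notin F.
Proof.
exists (sumn F).+1; apply/negP => /mem_le_sumn; by rewrite ltnn.
Qed.

Lemma null_greedy (a : nat -> R[i]) : null_seq a ->
  exists e, greedy (fun k => cabs (a k)) e.
Proof.
move=> na; have [e [ge _]] := @greedy_exists _ (fun k => cabs (a k)) id
  (fun k => cabs_ge0 (a k)) (null_finsup na) nat_inf.
by exists e.
Qed.

Lemma greedy_bound (I : eqType) (f : I -> R) e : greedy f e -> finsup f ->
  forall d, 0 < d -> exists M, forall i, d <= f (e i) -> (i < M)%N.
Proof.
move=> ge fs d d0; have [L HL] := fs d d0; exists (size L) => i di.
rewrite ltnNge; apply/negP => Li.
have := @uniq_leq_size _ (map e (iota 0 (size L).+1)) L.
rewrite size_map size_iota ltnn map_inj_uniq ?iota_uniq; last by case: ge.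
move=> /(_ isT) H; suff : false by []; apply: H => x /mapP[k].
rewrite mem_iota add0n => /andP[_ kL] ->; apply: HL; apply: le_trans di _.
by apply: greedy_mono ge _; apply: leq_trans Li.
Qed.

Lemma greedy_cover (I : eqType) (f : I -> R) e : greedy f e -> finsup f ->
  forall k, 0 < f k -> exists i, e i = k.
Proof.
move=> ge fs k fk; have [M HM] := greedy_bound ge fs fk.
apply: contrapT => H; suff : f k <= f (e M) by move/HM; rewrite ltnn.
case: ge => _ g; apply: g; apply/mapP => -[i _ ki]; apply: H; by exists i.
Qed.

Lemma greedy_id (f : nat -> R) : (forall n, f n.+1 <= f n) -> greedy f id.
Proof.
move=> fd; split => // n j; rewrite map_id mem_iota add0n /= -leqNgt => nj.
rewrite -(subnKC nj); elim: (j - n)%N => [|k IH]; first by rewrite addn0.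
by rewrite addnS; apply: le_trans (fd _) IH.
Qed.

Lemma sub_sum (T : eqType) (s t : seq T) (F : T -> R) : uniq s -> {subset s <= t} ->
  uniq t -> (forall x, 0 <= F x) -> \sum_(x <- s) F x <= \sum_(x <- t) F x.
Proof.
move=> us st ut F0; rewrite [X in _ <= X](bigID (fun x => x \in s)) /=.
have -> : \sum_(x <- t | x \in s) F x = \sum_(x <- s) F x.
  rewrite -big_filter; apply: perm_big; apply: uniq_perm; rewrite ?filter_uniq //.
  move=> x; rewrite mem_filter; case xs: (x \in s) => //=; exact: st.
by rewrite lerDl; apply: sumr_ge0 => x _.
Qed.

Lemma inf_pairs (F : seq (nat * nat)) : exists z, z \notin F.
Proof.
have [n nF] := nat_inf (map fst F); exists (n, 0%N); apply/negP => H.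
by move/negP: nF; apply; apply/mapP; exists (n, 0%N).
Qed.

Lemma finsup_prod (al be : nat -> R) :
  (forall i, 0 <= al i) -> (forall j, 0 <= be j) ->
  (forall i, al i <= al 0%N) -> (forall j, be j <= be 0%N) ->
  (forall d, 0 < d -> exists M, forall i, d <= al i -> (i < M)%N) ->
  (forall d, 0 < d -> exists M, forall j, d <= be j -> (j < M)%N) ->
  finsup (fun z : nat * nat => al z.1 * be z.2).
Proof.
move=> a0 b0 amax bmax abd bbd eps e0.
have [az|an] := eqVneq (al 0%N) 0.
  exists [::] => z /= ez; suff : eps <= 0 by rewrite leNgt e0.
  apply: le_trans ez _; rewrite -az.
  by apply: le_trans (ler_wpM2r (b0 _) (amax _)) _; rewrite az mul0r.
have [bz|bn] := eqVneq (be 0%N) 0.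
  exists [::] => z /= ez; suff : eps <= 0 by rewrite leNgt e0.
  apply: le_trans ez _.
  by apply: le_trans (ler_wpM2l (a0 _) (bmax _)) _; rewrite bz mulr0.
have ap : 0 < al 0%N by rewrite lt_def an a0.
have bp : 0 < be 0%N by rewrite lt_def bn b0.
have [Ma HMa] := abd (eps / be 0%N) (divr_gt0 e0 bp).
have [Mb HMb] := bbd (eps / al 0%N) (divr_gt0 e0 ap).
exists [seq (i, j) | i <- iota 0 Ma, j <- iota 0 Mb] => -[i j] /= ez.
apply/allpairsP; exists (i, j); split => //=; rewrite mem_iota add0n /=.
  apply: HMa; rewrite ler_pdivrMr //; apply: le_trans ez _.
  by apply: ler_wpM2l; [exact: a0 | exact: bmax].
apply: HMb; rewrite ler_pdivrMr //; apply: le_trans ez _.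
by rewrite mulrC; apply: ler_wpM2l; [exact: b0 | exact: amax].
Qed.

Lemma prefix_boxclosed (al be : nat -> R) (P : nat -> nat * nat) :
  (forall i, 0 <= al i) -> (forall j, 0 <= be j) ->
  (forall i j, (i <= j)%N -> al j <= al i) -> (forall i j, (i <= j)%N -> be j <= be i) ->
  greedy (fun z : nat * nat => al z.1 * be z.2) P ->
  tiebreak (fun z : nat * nat => al z.1 * be z.2) (fun z => z.1 + z.2)%N P ->
  forall N, boxclosed (map P (iota 0 N)).
Proof.
move=> a0 b0 ad bd [iP gP] tP N y /mapP[n]; rewrite mem_iota add0n /= => nN -> z z1 z2.
suff : z \in map P (iota 0 n.+1).
  case/mapP => k; rewrite mem_iota add0n /= => kn ->; apply/mapP; exists k => //.
  by rewrite mem_iota add0n; apply: leq_trans kn nN.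
apply: contraT => zn.
have zn' : z \notin map P (iota 0 n).
  apply: contra zn => /mapP[k]; rewrite mem_iota add0n => kn ->.
  by apply/mapP; exists k => //; rewrite mem_iota /=; move: kn => /= kn; lia.
have le1 := gP n z zn'.
have ge1 : al (P n).1 * be (P n).2 <= al z.1 * be z.2.
  by apply: ler_pM; rewrite ?a0 ?b0 //; [apply: ad | apply: bd].
have eqV : al z.1 * be z.2 = al (P n).1 * be (P n).2.
  by apply/eqP; rewrite eq_le le1 ge1.
have kz := tP n z zn' eqV.
have e1 : z.1 = (P n).1 by move: kz => /= kz; lia.
have e2 : z.2 = (P n).2 by move: kz => /= kz; lia.
have ez : z = P n by move: e1 e2; case: (z); case: (P n) => ? ? ? ? /= -> ->.
have : P n \in map P (iota 0 n.+1).
  by apply/mapP; exists n => //; rewrite mem_iota add0n ltnS leqnn.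
by rewrite -ez (negbTE zn).
Qed.
Variables (w : nat -> R) (p : R).
Hypothesis hv0 : forall n, 0 <= w n.+1.
Hypothesis hvd : forall n, w n.+2 <= w n.+1.
Hypothesis p0 : 0 <= p.

Definition Lam (g : nat -> R) : \bar R := (\sum_(0 <= n <oo) (w n.+1 * g n `^ p)%:E)%E.

Lemma Lam_ge_part (g : nat -> R) N :
  ((\sum_(n < N) w n.+1 * g n `^ p)%:E <= Lam g)%E.
Proof.
rewrite -sumEFin -(big_mkord xpredT (fun n => (w n.+1 * g n `^ p)%:E)).
apply: nneseries_lim_ge => n _ _; rewrite lee_fin; apply: mulr_ge0 => //.
exact: powR_ge0.
Qed.

Lemma Lam_le_ub (g : nat -> R) M : (forall N, ((\sum_(n < N) w n.+1 * g n `^ p)%:E <= M)%E) ->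
  (Lam g <= M)%E.
Proof.
move=> H; apply: nneseries_le_ub => [n|N].
  by rewrite lee_fin; apply: mulr_ge0 => //; exact: powR_ge0.
by rewrite sumEFin big_mkord.
Qed.

Lemma pow_ub (a : nat -> R[i]) e : greedy (fun k => cabs (a k)) e ->
  (lorentz_pow w p a <= Lam (fun n => cabs (a (e n))))%E.
Proof.
move=> ge; apply: ge_ereal_sup => _ [pi /= bpi <-].
apply: (Lam_le_ub (g := fun n => cabs (a (pi n)))) => N.
apply: le_trans (Lam_ge_part _ N); rewrite lee_fin.
apply: (@abel2 (fun n => w n.+1) (fun n => cabs (a (pi n)) `^ p)
   (fun n => cabs (a (e n)) `^ p)) => // k kN.
have := @greedy_major _ _ e (fun x => x `^ p) (map pi (iota 0 k.+1)) ge
  (fun i => cabs_ge0 (a i)) (fun x y => powR_homo p0).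
rewrite size_map size_iota big_map sum_iota_ord; apply.
rewrite map_inj_uniq ?iota_uniq //; exact: bij_inj.
Qed.

Lemma bij_extend (e : nat -> nat) N : injective e ->
  exists pi : nat -> nat, bijective pi /\ forall n, (n < N)%N -> pi n = e n.
Proof.
move=> ie; elim: N => [|N [pi [[g pig gpi] H]]].
  by exists id; split => //; exists id.
pose t := g (e N).
pose sw x := if x == N then t else if x == t then N else x.
have swK : involutive sw.
  move=> x; rewrite /sw; case: (eqVneq x N) => [->|xN].
    by case: (eqVneq t N) => [->|tN]; rewrite ?eqxx // tN eqxx.
  case: (eqVneq x t) => [->|xt]; first by rewrite eqxx.
  by rewrite (negbTE xN) (negbTE xt).
exists (pi \o sw); split; first by apply: bij_comp; [exists g | exact: inv_bij].
move=> n; rewrite ltnS leq_eqVlt => /orP[/eqP ->|nN] /=.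
  by rewrite /sw eqxx /t gpi.
have nN' : n != N by rewrite neq_ltn nN.
have nt : n != t.
  apply/eqP => nt; have := H n nN; rewrite nt /t gpi => /ie eN.
  by move: nN'; rewrite nt /t -eN eqxx.
by rewrite /sw (negbTE nN') (negbTE nt); apply: H.
Qed.

Lemma pow_lb (a : nat -> R[i]) e : injective e ->
  (Lam (fun n => cabs (a (e n))) <= lorentz_pow w p a)%E.
Proof.
move=> ie; apply: Lam_le_ub => N.
have [pi [bpi H]] := bij_extend N ie.
have -> : \sum_(n < N) w n.+1 * cabs (a (e n)) `^ p =
          \sum_(n < N) w n.+1 * cabs (a (pi n)) `^ p.
  by apply: eq_bigr => n _; rewrite H.
apply: le_trans (Lam_ge_part (fun n => cabs (a (pi n))) N) _.
by apply: ereal_sup_ubound; exists pi.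
Qed.

Hypothesis hdiv : (\sum_(1 <= n <oo) (w n)%:E = +oo)%E.

Lemma w_unbounded M : exists N, M < \sum_(n < N) w n.+1.
Proof.
apply: contrapT => H.
have H' : forall N, \sum_(n < N) w n.+1 <= M.
  move=> N; rewrite leNgt; apply/negP => h; apply: H; by exists N.
have : (\sum_(1 <= n <oo) (w n)%:E <= M%:E)%E.
  apply: (lime_le (is_cvg_nneseries (P := xpredT) (N := 1%N) (u_ := fun n => (w n)%:E) _)).
    by case=> // n _ _; rewrite lee_fin.
  apply: nearW => -[|n]; rewrite sumEFin lee_fin.
    by rewrite big_geq //; apply: le_trans (H' 0%N); rewrite big_ord0.
  by rewrite big_add1 /= big_mkord.
by rewrite hdiv leye_eq.
Qed.

Hypothesis pgt0 : 0 < p.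

Lemma pow_null (a : nat -> R[i]) : (lorentz_pow w p a < +oo)%E -> null_seq a.
Proof.
move=> afin; apply: contrapT => nn.
have [eps e0 Heps] : exists2 eps : R, 0 < eps &
    forall N, exists n, (N <= n)%N /\ eps <= cabs (a n).
  apply: contrapT => H; apply: nn; apply/cvgrPdist_lt => eps e0.
  have [N HN] : exists N, forall n, (N <= n)%N -> cabs (a n) < eps.
    apply: contrapT => H2; apply: H; exists eps => // N.
    apply: contrapT => H3; apply: H2; exists N => n Nn.
    rewrite ltNge; apply/negP => h; apply: H3; by exists n.
  exists N => // n Nn /=; rewrite sub0r normrN ger0_norm ?cabs_ge0 //.
  exact: HN.
pose s N := projT1 (cid (Heps N)).
have sP : forall N, (N <= s N)%N /\ eps <= cabs (a (s N)).
  by move=> N; rewrite /s; case: cid.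
pose e := fix e n := if n is n'.+1 then s (e n').+1 else s 0%N.
have einc : forall n, (e n < e n.+1)%N by move=> n; case: (sP (e n).+1).
have ehomo := homo_ltn ltn_trans einc.
have ie : injective e.
  move=> m n emn; case: (ltngtP m n) => [lt|lt|//].
    by have := ehomo _ _ lt; rewrite emn ltnn.
  by have := ehomo _ _ lt; rewrite emn ltnn.
have eP : forall n, eps <= cabs (a (e n)) by case=> [|n]; [case: (sP 0%N)|case: (sP (e n).+1)].
have pa0 : (0 <= lorentz_pow w p a)%E.
  apply: le_trans (pow_lb a ie); apply: nneseries_ge0 => n _ _.
  by rewrite lee_fin; apply: mulr_ge0 => //; exact: powR_ge0.
have fa : lorentz_pow w p a \is a fin_num by rewrite ge0_fin_numE.
set r := fine (lorentz_pow w p a).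
have ep0 : 0 < eps `^ p by apply: powR_gt0.
have [N HN] := w_unbounded (r / eps `^ p).
have : ((\sum_(n < N) w n.+1 * cabs (a (e n)) `^ p)%:E <= r%:E)%E.
  rewrite /r fineK //; apply: le_trans (pow_lb a ie); exact: Lam_ge_part.
rewrite lee_fin; apply/negP; rewrite -ltNge.
apply: lt_le_trans (_ : eps `^ p * \sum_(n < N) w n.+1 <= _).
  by rewrite mulrC -ltr_pdivrMr.
rewrite mulr_sumr; apply: ler_sum => n _; rewrite mulrC; apply: ler_wpM2l => //.
exact: powR_homo p0 (ltW e0) (eP n).
Qed.

Lemma part_le_pow (a : nat -> R[i]) (pi : nat -> nat) N : bijective pi ->
  ((\sum_(n < N) w n.+1 * cabs (a (pi n)) `^ p)%:E <= lorentz_pow w p a)%E.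
Proof.
move=> bpi; apply: le_trans (Lam_ge_part (fun n => cabs (a (pi n))) N) _.
by apply: ereal_sup_ubound; exists pi.
Qed.

Lemma pow_ge0 (a : nat -> R[i]) : (0 <= lorentz_pow w p a)%E.
Proof.
have := @part_le_pow a id 0%N; rewrite big_ord0; apply; by exists id.
Qed.

Lemma L_fin (a : nat -> R[i]) : lorentz_space w p a ->
  lorentz_pow w p a = (fine (lorentz_pow w p a))%:E.
Proof. by move=> La; rewrite fineK // ge0_fin_numE ?pow_ge0. Qed.

Lemma part_le_fine (a : nat -> R[i]) (pi : nat -> nat) N : lorentz_space w p a -> bijective pi ->
  \sum_(n < N) w n.+1 * cabs (a (pi n)) `^ p <= fine (lorentz_pow w p a).
Proof. by move=> La bpi; rewrite -lee_fin -L_fin //; apply: part_le_pow. Qed.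

Lemma pow_le_parts (a : nat -> R[i]) (r : R) :
  (forall (pi : nat -> nat) N, bijective pi -> \sum_(n < N) w n.+1 * cabs (a (pi n)) `^ p <= r) ->
  (lorentz_pow w p a <= r%:E)%E.
Proof.
move=> H; apply: ge_ereal_sup => _ [pi /= bpi <-].
by apply: (Lam_le_ub (g := fun n => cabs (a (pi n)))) => N; rewrite lee_fin; apply: H.
Qed.

Lemma L_of_parts (a : nat -> R[i]) (r : R) :
  (forall (pi : nat -> nat) N, bijective pi -> \sum_(n < N) w n.+1 * cabs (a (pi n)) `^ p <= r) ->
  lorentz_space w p a.
Proof. move=> H; change (lorentz_pow w p a < +oo)%E; exact: le_lt_trans (pow_le_parts H) (ltry _). Qed.

Lemma L0 : lorentz_space w p (fun _ => 0).
Proof.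
apply: (@L_of_parts _ 0) => pi N _; rewrite big1 // => n _.
by rewrite cabs0 powR0 ?mulr0 // gt_eqF.
Qed.

Lemma powD_le (x y : R) : 0 <= x -> 0 <= y ->
  (x + y) `^ p <= 2 `^ p * (x `^ p + y `^ p).
Proof.
wlog xy : x y / x <= y.
  move=> H x0 y0; have [xy|yx] := leP x y; first exact: H.
  by rewrite addrC [x `^ p + _]addrC; apply: H => //; exact: ltW.
move=> x0 y0; apply: (@le_trans _ _ ((2 * y) `^ p)).
  by apply: powR_homo => //; [exact: addr_ge0 | rewrite mulr2n mulrDl mul1r lerD2r].
rewrite powRM // ?ler0n //; apply: ler_wpM2l; first exact: powR_ge0.
by rewrite lerDr powR_ge0.
Qed.

Lemma LD (a b : nat -> R[i]) : lorentz_space w p a -> lorentz_space w p b ->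
  lorentz_space w p (fun n => a n + b n).
Proof.
move=> La Lb; apply: (@L_of_parts _ (2 `^ p * (fine (lorentz_pow w p a) + fine (lorentz_pow w p b)))).
move=> pi N bpi.
apply: (@le_trans _ _ (2 `^ p * (\sum_(n < N) w n.+1 * cabs (a (pi n)) `^ p +
   \sum_(n < N) w n.+1 * cabs (b (pi n)) `^ p))); last first.
  apply: ler_wpM2l; first exact: powR_ge0.
  by apply: lerD; apply: part_le_fine.
rewrite -big_split mulr_sumr; apply: ler_sum => n _.
rewrite /= -mulrDr mulrCA; apply: ler_wpM2l => //.
apply: le_trans (powD_le (cabs_ge0 _) (cabs_ge0 _)).
apply: powR_homo => //; [exact: cabs_ge0 | exact: cabsD].
Qed.

Lemma LZ (c : R[i]) (a : nat -> R[i]) : lorentz_space w p a ->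
  lorentz_space w p (fun n => c * a n).
Proof.
move=> La; apply: (@L_of_parts _ (cabs c `^ p * fine (lorentz_pow w p a))) => pi N bpi.
apply: le_trans (_ : cabs c `^ p * \sum_(n < N) w n.+1 * cabs (a (pi n)) `^ p <= _).
  rewrite mulr_sumr; apply: ler_sum => n _.
  by rewrite cabsM powRM ?cabs_ge0 // mulrCA.
apply: ler_wpM2l; first exact: powR_ge0.
exact: part_le_fine.
Qed.

Lemma LH (a b : nat -> R[i]) : lorentz_space w p a -> null_seq b ->
  (forall n, rearr b n <= rearr a n) -> lorentz_space w p b.
Proof.
move=> La nb H; have na := pow_null La.
have [ea gea] := null_greedy na; have [eb geb] := null_greedy nb.
change (lorentz_pow w p b < +oo)%E.
apply: le_lt_trans (pow_ub geb) _.
apply: le_lt_trans La; apply: le_trans (pow_lb a (proj1 gea)).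
apply: lee_nneseries => [n _ _|n _].
  by rewrite lee_fin; apply: mulr_ge0 => //; exact: powR_ge0.
rewrite lee_fin; apply: ler_wpM2l => //; apply: powR_homo => //; first exact: cabs_ge0.
have := H n; rewrite /rearr (greedy_dec n gea) (greedy_dec n geb) //.
Qed.

Lemma calkinL : calkin (lorentz_space w p).
Proof.
split.
- by move=> a La; apply: pow_null.
- exact: L0.
- exact: LD.
- exact: LZ.
- exact: LH.
Qed.

Lemma tensor_struct (a b : nat -> R[i]) : null_seq a -> null_seq b ->
  exists (ea eb : nat -> nat) (P : nat -> nat * nat),
  [/\ greedy (fun k => cabs (a k)) ea, greedy (fun k => cabs (b k)) eb,
      greedy (fun z : nat * nat => cabs (a (ea z.1)) * cabs (b (eb z.2))) P,
      tiebreak (fun z : nat * nat => cabs (a (ea z.1)) * cabs (b (eb z.2)))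
        (fun z => z.1 + z.2)%N P &
      forall n, tensor a b n = (cabs (a (ea (P n).1)) * cabs (b (eb (P n).2)))%:C].
Proof.
move=> na nb.
have [ea gea] := null_greedy na; have [eb geb] := null_greedy nb.
have fa := null_finsup na; have fb := null_finsup nb.
have fV : finsup (fun z : nat * nat => cabs (a (ea z.1)) * cabs (b (eb z.2))).
  apply: (@finsup_prod (fun i => cabs (a (ea i))) (fun j => cabs (b (eb j)))).
  - by move=> i; exact: cabs_ge0.
  - by move=> i; exact: cabs_ge0.
  - by move=> i; exact: (greedy_mono gea (leq0n i)).
  - by move=> i; exact: (greedy_mono geb (leq0n i)).
  - exact: greedy_bound gea fa.
  - exact: greedy_bound geb fb.
have V0 : forall z : nat * nat, 0 <= cabs (a (ea z.1)) * cabs (b (eb z.2)).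
  by move=> z; apply: mulr_ge0; exact: cabs_ge0.
have [P [gP tP]] := greedy_exists (fun z : nat * nat => (z.1 + z.2)%N) V0 fV inf_pairs.
exists ea, eb, P; split => // n.
pose h := fun ij : nat * nat => cabs (a ij.1 * b ij.2).
pose P' n := (ea (P n).1, eb (P n).2).
have gP' : greedy h P'.
  split.
    move=> m k [] /(proj1 gea) e1 /(proj1 geb) e2; apply: (proj1 gP).
    by move: e1 e2; case: (P m); case: (P k) => ? ? ? ? /= -> ->.
  move=> k [x y] H; rewrite /h /= !cabsM.
  have [x0|xp] := eqVneq (cabs (a x)) 0.
    by rewrite x0 mul0r; apply: mulr_ge0; exact: cabs_ge0.
  have [y0|yp] := eqVneq (cabs (b y)) 0.
    by rewrite y0 mulr0; apply: mulr_ge0; exact: cabs_ge0.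
  have [i ei] : exists i, ea i = x.
    by apply: (greedy_cover gea fa); rewrite lt_def xp cabs_ge0.
  have [j ej] : exists j, eb j = y.
    by apply: (greedy_cover geb fb); rewrite lt_def yp cabs_ge0.
  have ijn : (i, j) \notin map P (iota 0 k).
    apply/negP => /mapP[m mk eq]; move/negP: H; apply; apply/mapP; exists m => //.
    by rewrite /P' -eq /= ei ej.
  by have := proj2 gP k _ ijn; rewrite /= ei ej.
by rewrite /tensor (greedy_dec n gP') /h /P' /= cabsM.
Qed.

Lemma abel2' (v x y : nat -> R) N : (forall n, 0 <= v n) -> (forall n, v n.+1 <= v n) ->
  (forall k, (k < N)%N -> \sum_(n < k.+1) x n <= \sum_(n < k.+1) y n) ->
  \sum_(n < N) x n * v n <= \sum_(n < N) y n * v n.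
Proof.
move=> v0 vd h; rewrite (eq_bigr (fun n : 'I_N => v n * x n)); last by move=> *; rewrite mulrC.
rewrite [X in _ <= X](eq_bigr (fun n : 'I_N => v n * y n)); last by move=> *; rewrite mulrC.
exact: abel2.
Qed.

Variable C : R.
Hypothesis C0 : 0 < C.
Hypothesis hmul : forall m n, (1 <= m)%N -> (1 <= n)%N -> w (m * n)%N <= C * w m * w n.

Lemma tensor_main (a b : nat -> R[i]) : lorentz_space w p a -> lorentz_space w p b ->
  (lorentz_pow w p (tensor a b) <=
     (C * fine (lorentz_pow w p a) * fine (lorentz_pow w p b))%:E)%E.
Proof.
move=> La Lb.
have [ea [eb [P [gea geb gP tP tE]]]] := tensor_struct (pow_null La) (pow_null Lb).
pose al i := cabs (a (ea i)); pose be j := cabs (b (eb j)).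
pose t n := al (P n).1 * be (P n).2.
have al0 i : 0 <= al i by exact: cabs_ge0.
have be0 j : 0 <= be j by exact: cabs_ge0.
have t0 n : 0 <= t n by apply: mulr_ge0.
have ctE n : cabs (tensor a b n) = t n by rewrite tE cabsC ger0_norm //; apply: (t0 n).
have td n : t n.+1 <= t n by exact: (greedy_mono gP (leqnSn n)).
have git : greedy (fun k => cabs (tensor a b k)) id.
  by apply: greedy_id => n; rewrite !ctE.
apply: le_trans (pow_ub git) _.
apply: Lam_le_ub => N; rewrite lee_fin.
under eq_bigr do rewrite /= ctE.
pose A i := w i.+1 * al i `^ p; pose B j := w j.+1 * be j `^ p.
have A0 i : 0 <= A i by apply: mulr_ge0 => //; exact: powR_ge0.
have B0 j : 0 <= B j by apply: mulr_ge0 => //; exact: powR_ge0.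
apply: (@le_trans _ _ (\sum_(n < N) w (qq (P n)) * t n `^ p)).
  apply: (@abel2' (fun n => t n `^ p) (fun n => w n.+1) (fun n => w (qq (P n)))) => [n|n|k kN]; first exact: powR_ge0.
    exact: powR_homo.
  have uD : uniq (map P (iota 0 k.+1)) by rewrite map_inj_uniq ?iota_uniq //; case: gP.
  have := sum_q hvd uD (@prefix_boxclosed _ _ _ al0 be0 _ _ gP tP k.+1).
  rewrite size_map size_iota big_map sum_iota_ord; apply.
  - by move=> i j ij; exact: (greedy_mono gea ij).
  - by move=> i j ij; exact: (greedy_mono geb ij).
apply: (@le_trans _ _ (C * \sum_(n < N) (A (P n).1 * B (P n).2))).
  rewrite mulr_sumr; apply: ler_sum => n _.
  rewrite /t powRM // /A /B /qq.
  apply: le_trans (ler_wpM2r _ (hmul _ _)) _ => //.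
    by apply: mulr_ge0; exact: powR_ge0.
  by rewrite le_eqVlt; apply/orP; left; apply/eqP; ring.
pose M := (sumn (map (fun n => (P n).1 + (P n).2) (iota 0 N))).+1.
apply: (@le_trans _ _ (C * \sum_(z <- [seq (i, j) | i <- iota 0 M, j <- iota 0 M])
   (A z.1 * B z.2))).
  apply: ler_wpM2l; first exact: ltW.
  rewrite -(sum_iota_ord (fun n => A (P n).1 * B (P n).2)) -(big_map P xpredT (fun z => A z.1 * B z.2)).
  apply: sub_sum.
  - by rewrite map_inj_uniq ?iota_uniq //; case: gP.
  - move=> z /mapP[n nN ->]; apply/allpairsP; exists (P n); split; last by case: (P n).
      rewrite mem_iota add0n /= ltnS; apply: leq_trans (leq_addr (P n).2 _) _.
      by apply: mem_le_sumn; apply/mapP; exists n.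
    rewrite mem_iota add0n /= ltnS; apply: leq_trans (leq_addl (P n).1 _) _.
    by apply: mem_le_sumn; apply/mapP; exists n.
  - by apply: allpairs_uniq; rewrite ?iota_uniq // => -[x1 x2] [x3 x4] _ _ /= [-> ->].
  - by move=> z; apply: mulr_ge0.
have E (s s2 : seq nat) : \sum_(z <- [seq (i, j) | i <- s, j <- s2]) A z.1 * B z.2 =
    (\sum_(i <- s) A i) * (\sum_(j <- s2) B j).
  by rewrite big_allpairs mulr_suml; apply: eq_bigr => i _; rewrite mulr_sumr.
rewrite E !sum_iota_ord -mulrA.
apply: ler_wpM2l; first exact: ltW.
apply: ler_pM; try by apply: sumr_ge0.
  rewrite -lee_fin -L_fin //; apply: le_trans (pow_lb a (proj1 gea)).
  exact: Lam_ge_part.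
rewrite -lee_fin -L_fin //; apply: le_trans (pow_lb b (proj1 geb)).
exact: Lam_ge_part.
Qed.

Definition e1 : nat -> R[i] := fun n => if n == 0%N then 1 else 0.

Lemma cabs_e1 n : cabs (e1 n) = if n == 0%N then 1 else 0.
Proof.
case: n => [|n] /=; last by rewrite /e1 /= cabs0.
by rewrite /e1 /= /cabs /= expr1n expr0n addr0 sqrtr1.
Qed.

Lemma Le1 : lorentz_space w p e1.
Proof.
have g1 : greedy (fun k => cabs (e1 k)) id.
  apply: greedy_id => n; rewrite !cabs_e1 /=; case: n => //= *; exact: ler01.
change (lorentz_pow w p e1 < +oo)%E.
apply: le_lt_trans (pow_ub g1) _; apply: le_lt_trans (ltry (w 1%N)).
apply: Lam_le_ub => -[|N]; rewrite lee_fin; first by rewrite big_ord0 hv0.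
rewrite big_ord_recl /= big1 ?addr0 ?cabs_e1 /= ?powR1 ?mulr1 // => i _.
by rewrite cabs_e1 /= powR0 ?mulr0 // gt_eqF.
Qed.

Lemma tensor_e1 (a : nat -> R[i]) : null_seq a -> exists ea,
  greedy (fun k => cabs (a k)) ea /\ forall n, tensor a e1 n = (cabs (a (ea n)))%:C.
Proof.
move=> na; have [ea gea] := null_greedy na; exists ea; split => // n.
pose h := fun ij : nat * nat => cabs (a ij.1 * e1 ij.2).
pose P' n := (ea n, 0%N).
have gP' : greedy h P'.
  split; first by move=> m k [] /(proj1 gea).
  move=> k [x y] H; rewrite /h /= !cabsM !cabs_e1 /=.
  case: y H => [|y] H /=; last first.
    by rewrite mulr0; apply: mulr_ge0; rewrite ?cabs_ge0 ?ler01.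
  rewrite !mulr1; apply: (proj2 gea); apply: contra H => /mapP[m mk ->].
  by apply/mapP; exists m.
by rewrite /tensor (greedy_dec n gP') /h /P' /= cabsM cabs_e1 /= mulr1.
Qed.

Lemma L_tensor (a b : nat -> R[i]) : lorentz_space w p a -> lorentz_space w p b ->
  lorentz_space w p (tensor a b).
Proof.
move=> La Lb; change (lorentz_pow w p (tensor a b) < +oo)%E.
exact: le_lt_trans (tensor_main La Lb) (ltry _).
Qed.

Lemma stableL : stable (lorentz_space w p).
Proof.
rewrite /stable; apply/seteqP; split.
  move=> x Hx; apply: Hx; first exact: calkinL.
  by move=> _ [a La [b Lb <-]]; apply: L_tensor.
move=> a La J [_ _ _ _ hJ] TJ.
have na := pow_null La.
have [ea [gea tE]] := tensor_e1 na.
apply: (hJ (tensor a e1)); [|exact: na|].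
  by apply: TJ; exists a; [exact: La | exists e1; [exact: Le1 | by []]].
move=> n; rewrite /rearr (greedy_dec n gea).
have g2 : greedy (fun k => cabs (tensor a e1 k)) id.
  apply: greedy_id => k; rewrite !tE !cabsC !ger0_norm ?cabs_ge0 //.
  exact: (greedy_mono gea (leqnSn k)).
by rewrite (greedy_dec n g2) /= tE cabsC ger0_norm ?cabs_ge0.
Qed.
End S.

Unset Implicit Arguments.
Local Close Scope complex_scope.
Local Open Scope ring_scope.

Theorem theorem2p10 (R : realType) (w : nat -> R) (C : R) :
  weight_seq w -> 0 < C ->
  (forall m n : nat, (1 <= m)%N -> (1 <= n)%N -> w (m * n)%N <= C * w m * w n) ->
  forall p : R, 1 <= p ->
    (forall a b : nat -> R[i],
       lorentz_space w p a -> lorentz_space w p b ->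
       lorentz_space w p (tensor a b) /\
       lorentz_norm w p (tensor a b)
         <= C `^ p^-1 * lorentz_norm w p a * lorentz_norm w p b)
    /\ calkin (lorentz_space w p) /\ stable (lorentz_space w p).
Proof.
move=> [w1 wpos wdec wlim wdiv] C0 hm p p1.
have hv0 : forall n, 0 <= w n.+1 by move=> n; exact: ltW (wpos _ (ltn0Sn n)).
have hvd : forall n, w n.+2 <= w n.+1 by move=> n; exact: wdec.
have pgt0 : 0 < p by apply: lt_le_trans p1; exact: ltr01.
have p0 : 0 <= p := ltW pgt0.
split; last first.
  by split; [exact: (calkinL hv0 hvd p0 wdiv pgt0) | exact: (stableL hv0 hvd p0 wdiv pgt0 C0 hm)].
move=> a b La Lb.
have Lt := L_tensor hv0 hvd p0 wdiv C0 hm La Lb.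
split => //.
have Hm := tensor_main hv0 hvd p0 wdiv C0 hm La Lb.
have H : fine (lorentz_pow w p (tensor a b)) <=
    C * fine (lorentz_pow w p a) * fine (lorentz_pow w p b).
  by rewrite -lee_fin -(L_fin hv0 Lt).
have ge0 x : 0 <= fine (lorentz_pow w p x) by apply: fine_ge0; exact: pow_ge0.
rewrite /lorentz_norm.
have q0 : 0 <= p^-1 by rewrite invr_ge0.
apply: le_trans (powR_homo q0 (ge0 (tensor a b)) H) _.
rewrite (powRM _ (mulr_ge0 (ltW C0) (ge0 a)) (ge0 b)).
by rewrite (powRM _ (ltW C0) (ge0 a)).
Qed.
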